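(* Let $\{\mu_n\}$ and $\mu$ be Borel probability measures on $\mathbb R^s$ with compact supports, and suppose $\mu_n\to\mu$ weakly. Then $\mathcal Z(\mu)=\emptyset$ if and only if there exist $\varepsilon>0$ and $N>0$ such that $\mathcal Z(\mu_n)=\emptyset$ for all $n\ge N$ and $$\sup_{n\ge N,\ \xi\in[0,1)^s}\ \min\{|k|:k\in\mathbb Z^s,\ |\widehat{\mu_n}(\xi+k)|\ge\varepsilon\}<\infty$$ (in particular, the set over which the minimum is taken is nonempty for every $n\ge N$ and $\xi\in[0,1)^s$).
   Context: $\widehat\mu(\xi)=\int e^{2\pi i\langle x,\xi\rangle}d\mu(x)$, and $\mathcal Z(\mu)=\{\xi\in[0,1)^s:\widehat\mu(\xi+k)=0\text{ for all }k\in\mathbb Z^s\}$. Weak convergence means $\int f\,d\mu_n\to\int f\,d\mu$ for all continuous compactly supported $f$. *)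

(* Defs.v *)
From HB Require Import structures.
From mathcomp Require Import all_boot all_order all_algebra.
From mathcomp Require Import all_classical all_reals all_analysis.
From mathcomp Require Import complex.
Set Implicit Arguments. Unset Strict Implicit. Unset Printing Implicit Defensive.
Import Order.TTheory GRing.Theory Num.Theory.
Import numFieldNormedType.Exports.
Local Open Scope classical_set_scope.
Local Open Scope ring_scope.

(* R^s is modelled as row vectors 'rV[R]_s (with their product/sup-norm
   topology); the Borel sigma-algebra is the one generated by open sets. *)
Definition Rs (R : realType) (s : nat) :=
  g_sigma_algebraType (@open 'rV[R]_s).

Definition dotv (R : realType) (s : nat) (x y : 'rV[R]_s) : R :=
  \sum_(i < s) x ord0 i * y ord0 i.

(* Fourier transform  hat mu (xi) = \int e^{2 pi i <x,xi>} d mu(x),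
   as a complex number (R[i]) with real part \int cos and imaginary part \int sin. *)
Definition fourier (R : realType) (s : nat) (mu : probability (Rs R s) R)
  (xi : 'rV[R]_s) : R[i] :=
  ((Rintegral mu setT (fun x : Rs R s => cos (2 * pi * dotv x xi))) +i*
   (Rintegral mu setT (fun x : Rs R s => sin (2 * pi * dotv x xi))))%C.

Definition unit_cube (R : realType) (s : nat) : set 'rV[R]_s :=
  [set xi | forall i : 'I_s, 0 <= xi ord0 i < 1].

Definition intvec (R : realType) (s : nat) (k : 'rV[int]_s) : 'rV[R]_s :=
  map_mx (fun z : int => z%:~R) k.

Definition Zset (R : realType) (s : nat) (mu : probability (Rs R s) R)
  : set 'rV[R]_s :=
  [set xi | @unit_cube R s xi /\
            forall k : 'rV[int]_s, fourier mu (xi + @intvec R s k) = 0].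

Definition compact_support (R : realType) (s : nat) (mu : probability (Rs R s) R)
  : Prop :=
  exists K : set 'rV[R]_s, compact K /\ mu (~` K) = 0%E.

Definition Cc (R : realType) (s : nat) (f : 'rV[R]_s -> R) : Prop :=
  continuous f /\ exists K : set 'rV[R]_s, compact K /\ forall x, ~ K x -> f x = 0.

Definition weak_cvg (R : realType) (s : nat)
  (mun : nat -> probability (Rs R s) R) (mu : probability (Rs R s) R) : Prop :=
  forall f : 'rV[R]_s -> R, Cc f ->
    (fun n => Rintegral (mun n) setT (f : Rs R s -> R)) @ \oo
      --> Rintegral mu setT (f : Rs R s -> R).

(* Main.v *)
Require Import Defs.
From HB Require Import structures.
From mathcomp Require Import all_boot all_order all_algebra.
From mathcomp Require Import all_classical all_reals all_analysis.
From mathcomp Require Import complex.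
From mathcomp Require Import ring lra.
Set Implicit Arguments. Unset Strict Implicit. Unset Printing Implicit Defensive.
Import Order.TTheory GRing.Theory Num.Theory.
Import numFieldNormedType.Exports.
Local Open Scope classical_set_scope.
Local Open Scope ring_scope.

Section Basic.
Variables (R : realType) (s : nat).
Implicit Types (x y : 'rV[R]_s).

Lemma cont_meas (f : 'rV[R]_s -> R) : continuous f ->
  measurable_fun [set: Rs R s] (f : Rs R s -> R).
Proof.
move=> /continuousP cf; apply: (measurability _ (measurable_realfun.RGenOpens.measurableE R)).
move=> _ [_ [a [b ->] <-]]; rewrite setTI.
apply: sub_sigma_algebra; apply: cf; exact: interval_open.
Qed.

Lemma cont_int (mu : probability (Rs R s) R) (f : 'rV[R]_s -> R) : continuous f ->
  (exists M, forall x, `|f x| <= M) -> mu.-integrable setT (EFin \o (f : Rs R s -> R)).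
Proof.
move=> cf [M fM]; apply: measurable_bounded_integrable => //.
  by apply: (@le_lt_trans _ _ 1%E); [exact: probability_le1|exact: ltry].
  exact: cont_meas.
exists M; split; first by rewrite num_real.
move=> y My x _; apply: le_trans (fM x) _; exact: ltW.
Qed.

Lemma coord_le x i : `|x ord0 i| <= `|x|.
Proof.
rewrite [leRHS]/Num.Def.normr /= mx_normrE; apply/bigmax_geP; right => /=.
by exists (ord0, i).
Qed.

Lemma dot_cont y : continuous (fun x : 'rV[R]_s => dotv x y).
Proof.
rewrite /dotv; apply: (@continuous_big R _ +%R 0 xpredT).
  exact: pseudometric_normed_Zmodule.add_continuous.
move=> i _ x; apply: continuousM; [exact: coord_continuous| exact: cst_continuous].
Qed.

Lemma dot_le x y : `|dotv x y| <= s%:R * `|x| * `|y|.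
Proof.
rewrite /dotv; apply: le_trans (ler_norm_sum _ _ _) _.
apply: le_trans (_ : \sum_(i < s) `|x| * `|y| <= _).
  apply: ler_sum => i _; rewrite normrM; apply: ler_pM => //; exact: coord_le.
by rewrite sumr_const card_ord -mulrA mulr_natl.
Qed.

Lemma dotB x a b : dotv x a - dotv x b = dotv x (a - b).
Proof.
rewrite /dotv -sumrB; apply: eq_bigr => i _; rewrite !mxE mulrBr //.
Qed.

Lemma lip_of (f df : R -> R) : (forall z : R, is_derive z (1:R) f (df z)) ->
  (forall z : R, `|df z| <= 1) -> forall u v : R, `|f u - f v| <= `|u - v|.
Proof.
move=> fd dfb.
have cf : continuous f.
  by move=> z; apply/differentiable_continuous/derivable1_diffP; exact: ex_derive.
suff H : forall u v, u <= v -> `|f u - f v| <= `|u - v|.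
  move=> u v; case: (leP u v) => uv; first exact: H.
  by rewrite distrC [X in _ <= X]distrC; apply: H; exact: ltW.
move=> u v uv; rewrite distrC [X in _ <= X]distrC.
have [c _ ->] := MVT_segment uv (fun z _ => fd z) (continuous_subspaceT cf).
by rewrite normrM ler_piMl.
Qed.

Lemma cos_lip u v : `|cos u - cos v| <= `|u - v| :> R.
Proof. by apply: (lip_of (fun z => is_derive_cos z)) => z; rewrite normrN sin_max. Qed.

Lemma sin_lip u v : `|sin u - sin v| <= `|u - v| :> R.
Proof. by apply: (lip_of (fun z => is_derive_sin z)) => z; rewrite cos_max. Qed.


Lemma bint (mu : probability (Rs R s) R) (f : Rs R s -> R) :
  measurable_fun setT f ->
  (exists M, forall x, `|f x| <= M) -> mu.-integrable setT (EFin \o f).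
Proof.
move=> cf [M fM]; apply: measurable_bounded_integrable => //.
  by apply: (@le_lt_trans _ _ 1%E); [exact: probability_le1|exact: ltry].
exists M; split; first by rewrite num_real.
move=> y My x _; apply: le_trans (fM x) _; exact: ltW.
Qed.

Definition phi (r : R) (x : 'rV[R]_s) : R := Num.min 1 (Num.max 0 (r + 1 - `|x|)).

Lemma phi_ge0 r x : 0 <= phi r x.
Proof. by rewrite /phi le_min ler01 le_max lexx. Qed.

Lemma phi_le1 r x : phi r x <= 1.
Proof. by rewrite /phi ge_min lexx. Qed.

Lemma phi1 r x : `|x| <= r -> phi r x = 1.
Proof.
move=> xr; rewrite /phi; apply/min_idPl; rewrite le_max; apply/orP; right.
by rewrite lerBrDr addrC lerD2r.
Qed.

Lemma phi_supp r x : phi r x != 0 -> `|x| < r + 1.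
Proof.
apply: contraNT; rewrite -leNgt => h; apply/eqP; rewrite /phi.
have -> : Num.max 0 (r + 1 - `|x|) = 0 by apply/max_idPl; rewrite subr_le0.
by apply/min_idPr; exact: ler01.
Qed.

Lemma phi_cont r : continuous (phi r).
Proof.
move=> x; apply: (@continuous_min _ _ (fun=> 1) (fun x => Num.max 0 (r + 1 - `|x|))).
  exact: cst_continuous.
apply: (@continuous_max _ _ (fun=> 0) (fun x => r + 1 - `|x|)).
  exact: cst_continuous.
apply: continuousB; first exact: cst_continuous.
exact: norm_continuous.
Qed.

Lemma cball_compact r : 0 < r -> compact [set x : 'rV[R]_s | `|x| <= r].
Proof.
move=> r0; apply: bounded_closed_compact.
  exists r; split; first by rewrite num_real.
  by move=> M rM x /= xr; apply: le_trans xr (ltW rM).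
have -> : [set x : 'rV[R]_s | `|x| <= r] = closed_ball 0 r.
  rewrite closed_ballE//; apply/seteqP; split => x /=; rewrite /closed_ball_ /= distrC subr0 //.
exact: closed_ball_closed.
Qed.

Lemma Cc_phi (g : 'rV[R]_s -> R) r : 0 < r -> continuous g ->
  Cc (fun x => g x * phi r x).
Proof.
move=> r0 cg; split.
  by move=> x; apply: continuousM; [exact: cg|exact: phi_cont].
exists [set x | `|x| <= r + 1]; split; first by apply: cball_compact; exact: addr_gt0.
move=> x xK; have /eqP -> : phi r x == 0; last by rewrite mulr0.
apply: contraT => /phi_supp /ltW h; by case: (xK h).
Qed.

Lemma int1 (mu : probability (Rs R s) R) : Rintegral mu setT (fun=> 1 : R) = 1.
Proof. rewrite Rintegral_cst// mul1r. exact: (f_equal fine (probability_setT mu)). Qed.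


Lemma int_phi (mu : probability (Rs R s) R) r :
  mu.-integrable setT (EFin \o (phi r : Rs R s -> R)).
Proof.
apply: cont_int; first exact: phi_cont.
by exists 1 => x; rewrite ger0_norm ?phi_ge0 ?phi_le1.
Qed.

Lemma int1B (mu : probability (Rs R s) R) r :
  Rintegral mu setT (fun x => 1 - phi r x) = 1 - Rintegral mu setT (phi r).
Proof.
rewrite RintegralB//; first by rewrite int1.
  by apply: bint => //; exists 1 => _; rewrite normr1.
exact: int_phi.
Qed.

Lemma int_1phi (mu : probability (Rs R s) R) r :
  mu.-integrable setT (EFin \o ((fun x => 1 - phi r x) : Rs R s -> R)).
Proof.
apply: cont_int.
  by move=> x; apply: continuousB; [exact: cst_continuous|exact: phi_cont].
exists 1 => x; rewrite ger0_norm ?subr_ge0 ?phi_le1//.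
by rewrite lerBlDr lerDl phi_ge0.
Qed.

Lemma Cc_phi1 r : 0 < r -> Cc (phi r).
Proof.
move=> r0; have := Cc_phi r0 (@cst_continuous _ _ (1:R)).
by have -> : (fun x => 1 * phi r x) = phi r by apply/funext => x; rewrite mul1r.
Qed.

Definition trig (t : R -> R) :=
  [/\ continuous t, forall u, `|t u| <= 1 & forall u v, `|t u - t v| <= `|u - v|].

Lemma cos_trig : trig cos.
Proof. split; [exact: continuous_cos|exact: cos_max|exact: cos_lip]. Qed.

Lemma sin_trig : trig sin.
Proof. split; [exact: continuous_sin|exact: sin_max|exact: sin_lip]. Qed.

Definition gt (t : R -> R) (xi : 'rV[R]_s) (x : 'rV[R]_s) := t (2 * pi * dotv x xi).

Lemma gt_cont t xi : trig t -> continuous (gt t xi).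
Proof.
case=> ct _ _ x; apply: (continuous_comp (f := fun x => 2 * pi * dotv x xi)).
  by apply: continuousM; [exact: cst_continuous|exact: dot_cont].
exact: ct.
Qed.

Lemma gt_le1 t xi x : trig t -> `|gt t xi x| <= 1.
Proof. by case=> _ h _; exact: h. Qed.

Lemma int_gt (mu : probability (Rs R s) R) t xi : trig t ->
  mu.-integrable setT (EFin \o (gt t xi : Rs R s -> R)).
Proof.
move=> ht; apply: cont_int; first exact: gt_cont.
by exists 1 => x; exact: gt_le1.
Qed.

Definition It (mu : probability (Rs R s) R) t xi := Rintegral mu setT (gt t xi : Rs R s -> R).

Lemma gt_diff t a b x r : trig t -> 0 < r ->
  `|gt t a x - gt t b x| <= 2 * pi * s%:R * (r + 1) * `|a - b| + 2 * (1 - phi r x).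
Proof.
move=> ht r0; have c0 : 0 <= 2 * pi * s%:R * (r + 1) * `|a - b|.
  by rewrite !mulr_ge0 // ?pi_ge0 // addr_ge0 // ltW.
have [/eqP p0|/phi_supp xr] := boolP (phi r x == 0).
  rewrite p0 subr0 mulr1; apply: le_trans (_ : 2 <= _); last by rewrite lerDr.
  apply: le_trans (ler_normB _ _) _.
  by rewrite -[2]/(1 + 1); apply: lerD; exact: gt_le1.
apply: le_trans (_ : 2 * pi * s%:R * (r + 1) * `|a - b| <= _); last first.
  by rewrite lerDl mulr_ge0 // subr_ge0 phi_le1.
case: ht => _ _ hl; apply: le_trans (hl _ _) _.
have p0 : 0 <= 2 * pi :> R by rewrite mulr_ge0 // pi_ge0.
rewrite -mulrBr dotB normrM (ger0_norm p0) -!mulrA.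
apply: ler_wpM2l => //; apply: ler_wpM2l; first exact: pi_ge0.
apply: le_trans (dot_le x (a - b)) _.
rewrite -mulrA; apply: ler_wpM2l => //; apply: ler_wpM2r => //; exact: ltW.
Qed.

Lemma int_cst (mu : probability (Rs R s) R) (c : R) : Rintegral mu setT (fun=> c) = c.
Proof. rewrite Rintegral_cst//. rewrite (f_equal fine (probability_setT mu)). by rewrite mulr1. Qed.

Lemma It_lip (mu : probability (Rs R s) R) t a b r : trig t -> 0 < r ->
  `|It mu t a - It mu t b| <= 2 * pi * s%:R * (r + 1) * `|a - b|
     + 2 * Rintegral mu setT (fun x => 1 - phi r x).
Proof.
move=> ht r0; set c := 2 * pi * s%:R * (r + 1) * `|a - b|.
have c0 : 0 <= c by rewrite !mulr_ge0 // ?pi_ge0 // addr_ge0 // ltW.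
have cp := @phi_cont r.
rewrite /It -RintegralB //; try exact: int_gt.
have ig : mu.-integrable setT (EFin \o ((fun x => gt t a x - gt t b x) : Rs R s -> R)).
  apply: cont_int.
    by move=> x; apply: continuousB; apply: gt_cont.
  exists 2 => x; apply: le_trans (ler_normB _ _) _.
  by rewrite -[2]/(1 + 1); apply: lerD; exact: gt_le1.
apply: le_trans (le_normr_Rintegral _ ig) _ => //.
have ih : mu.-integrable setT (EFin \o ((fun x => c + 2 * (1 - phi r x)) : Rs R s -> R)).
  apply: cont_int.
    move=> x; apply: (@continuousD _ _ _ (fun=> c) (fun x => 2 * (1 - phi r x))); first exact: cst_continuous.
    apply: continuousM; first exact: cst_continuous.
    by apply: continuousB; [exact: cst_continuous|exact: cp].
  exists (c + 2) => x; rewrite ger0_norm.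
    by rewrite lerD2l ler_piMr // ?subr_ge0 ?phi_le1 // lerBlDr lerDl phi_ge0.
  by rewrite addr_ge0 // mulr_ge0 // subr_ge0 phi_le1.
apply: le_trans (@le_Rintegral _ _ _ mu setT _ ((fun x => c + 2 * (1 - phi r x)) : Rs R s -> R) _ _ ih _) _ => //.
- exact: integrable_norm.
- by move=> x _; exact: gt_diff.
have i2 : mu.-integrable setT (EFin \o ((fun x => 2 * (1 - phi r x)) : Rs R s -> R)).
  apply: cont_int.
    move=> x; apply: (@continuousM _ _ (fun=> 2) (fun x => 1 - phi r x)); first exact: cst_continuous.
    by apply: continuousB; [exact: cst_continuous|exact: cp].
  exists 2 => x; rewrite ger0_norm ?mulr_ge0 ?subr_ge0 ?phi_le1 //.
  by rewrite ler_piMr // ?subr_ge0 ?phi_le1 // lerBlDr lerDl phi_ge0.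
rewrite RintegralD //; try exact: i2; try (by apply: bint => //; exists `|c| => _).
by rewrite int_cst RintegralZl //; exact: int_1phi.
Qed.

Lemma It_split (mu : probability (Rs R s) R) t xi r : trig t ->
  `|It mu t xi - Rintegral mu setT (fun x => gt t xi x * phi r x)|
     <= Rintegral mu setT (fun x => 1 - phi r x).
Proof.
move=> ht; have cp := @phi_cont r.
have i1 : mu.-integrable setT (EFin \o ((fun x => gt t xi x * phi r x) : Rs R s -> R)).
  apply: cont_int.
    by move=> x; apply: continuousM; [exact: gt_cont|exact: cp].
  exists 1 => x; rewrite normrM -[1]mulr1; apply: ler_pM => //.
    exact: gt_le1.
  by rewrite ger0_norm ?phi_ge0 ?phi_le1.
rewrite /It -RintegralB //; last exact: int_gt.
have ig : mu.-integrable setT (EFin \o ((fun x => gt t xi x - gt t xi x * phi r x) : Rs R s -> R)).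
  apply: cont_int.
    move=> x; apply: continuousB; first exact: gt_cont.
    by apply: continuousM; [exact: gt_cont|exact: cp].
  exists 1 => x; rewrite -{1}[gt t xi x]mulr1 -mulrBr normrM -[leRHS]mulr1.
  apply: ler_pM => //; first exact: gt_le1.
  by rewrite ger0_norm ?subr_ge0 ?phi_le1 // lerBlDr lerDl phi_ge0.
apply: le_trans (le_normr_Rintegral _ ig) _ => //.
apply: le_Rintegral => //; [exact: integrable_norm|exact: int_1phi|].
move=> x _; rewrite -{1}[gt t xi x]mulr1 -mulrBr normrM.
rewrite [X in _ * X]ger0_norm ?subr_ge0 ?phi_le1 //.
apply: ler_piMl; first by rewrite subr_ge0 phi_le1.
exact: gt_le1.
Qed.

End Basic.

Lemma seq_ubn (T : eqType) (l : seq T) (g : T -> nat) :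
  exists N, forall i, i \in l -> (g i <= N)%N.
Proof.
elim: l => [|a l [N HN]]; first by exists 0%N.
exists (maxn (g a) N) => i; rewrite inE => /orP[/eqP ->|/HN h].
  exact: leq_maxl.
exact: leq_trans h (leq_maxr _ _).
Qed.

Section Tight.
Variables (R : realType) (s : nat).
Variables (mun : nat -> probability (Rs R s) R) (mu : probability (Rs R s) R).
Hypothesis hmu : compact_support mu.
Hypothesis hw : weak_cvg mun mu.

Lemma tight : exists r : R, 0 < r /\
  (Rintegral mu setT (fun x => 1 - phi r x) = 0) /\
  (forall d : R, 0 < d -> \forall n \near \oo,
     Rintegral (mun n) setT (fun x => 1 - phi r x) <= d).
Proof.
case: hmu => K [cK muK].
have [M [_ HM]] := compact_bounded cK.
pose r := `|M| + 1.
have r0 : 0 < r by rewrite ltr_pwDr.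
have Kr : forall x, K x -> `|x| <= r.
  move=> x Kx; apply: (HM r) => //.
  by rewrite (le_lt_trans (ler_norm M)) // ltrDl.
have mK : measurable (~` K : set (Rs R s)).
  apply: sub_sigma_algebra; apply: closed_openC.
  exact: (compact_closed (@norm_hausdorff _ _) cK).
have int0 : Rintegral mu setT (fun x => 1 - phi r x) = 0.
  apply/eqP; rewrite eq_le; apply/andP; split; last first.
    by apply: Rintegral_ge0 => x _; rewrite subr_ge0 phi_le1.
  apply: le_trans (@le_Rintegral _ _ _ mu setT _ (\1_(~` K) : Rs R s -> R) _ _ _ _) _ => //.
  - exact: int_1phi.
  - apply: bint; first exact: measurable_realfun.measurable_indic.
    by exists 1 => x; rewrite indicE; case: (_ \in _); rewrite ?normr1 ?normr0.
  - move=> x _; rewrite indicE; case: (pselect (K x)) => Kx.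
      by rewrite phi1 ?Kr// subrr.
    have -> : x \in ~` K by rewrite inE.
    by rewrite lerBlDr lerDl phi_ge0.
  rewrite /Rintegral integral_indic// setIT.
  by rewrite (_ : fine _ = 0) //; exact: (f_equal fine muK).
have Ccp := @Cc_phi1 R s r r0.
exists r; split => //; split => // d d0.
have := hw Ccp; move/cvgrPdist_le => /(_ d d0); apply: filterS => n hn.
rewrite int1B; move: int0; rewrite int1B => /eqP; rewrite subr_eq0 => /eqP h.
by rewrite [X in X - _]h; apply: le_trans hn; exact: ler_norm.
Qed.

Lemma It_cvg t xi : trig t -> (fun n => It (mun n) t xi) @ \oo --> It mu t xi.
Proof.
move=> ht; have [r [r0 [int0 tn]]] := tight.
apply/cvgrPdist_le => e e0.
have e20 : 0 < e / 2 by rewrite divr_gt0.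
have := hw (Cc_phi r0 (@gt_cont R s t xi ht)); move/cvgrPdist_le => /(_ _ e20) h1.
apply: filterS2 h1 (tn _ e20) => n h1 h2.
set A := Rintegral mu setT _ in h1; set An := Rintegral (mun n) setT _ in h1.
have s1 := @It_split R s mu t xi r ht; rewrite int0 normr_le0 subr_eq0 in s1.
have s2 := @It_split R s (mun n) t xi r ht.
rewrite (eqP s1) -/A (_ : A - It (mun n) t xi = (A - An) + (An - It (mun n) t xi)); last first.
  by rewrite addrA subrK.
apply: le_trans (ler_normD _ _) _; rewrite (splitr e) lerD //.
by rewrite distrC; apply: le_trans s2 h2.
Qed.

Lemma It_unif t (C : set 'rV[R]_s) d : trig t -> compact C -> 0 < d ->
  \forall n \near \oo, forall q, C q -> `|It (mun n) t q - It mu t q| <= d.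
Proof.
move=> ht cC d0; have [r [r0 [int0 tn]]] := tight.
pose d' := d / 5; have d'0 : 0 < d' by rewrite divr_gt0.
pose L := 2 * pi * s%:R * (r + 1).
have L0 : 0 <= L by rewrite !mulr_ge0 // ?pi_ge0 // addr_ge0 // ltW.
pose eta := d' / (L + 1).
have eta0 : 0 < eta by rewrite divr_gt0 // ltr_wpDl.
have Leta : forall a b : 'rV[R]_s, `|a - b| < eta -> L * `|a - b| <= d'.
  move=> a b ab; apply: le_trans (_ : L * eta <= d').
    by apply: ler_wpM2l => //; exact: ltW.
  by rewrite /eta mulrA ler_pdivrMr ?ltr_wpDl // mulrC ler_pM2l // lerDl.
pose D := [set pn : 'rV[R]_s * nat | C pn.1 /\
   forall m, (pn.2 <= m)%N -> `|It (mun m) t pn.1 - It mu t pn.1| <= d'].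
pose f := fun pn : 'rV[R]_s * nat => ball pn.1 eta.
have cov : C `<=` cover D f.
  move=> q Cq; have := @It_cvg t q ht; move/cvgrPdist_le => /(_ _ d'0) [N _ HN].
  exists (q, N); last exact: ballxx.
  by split => // m Nm; rewrite distrC; apply: HN.
have cC' := cC; rewrite compact_cover in cC'.
have := cC' _ D f (fun i _ => ball_open _ _) cov.
case=> D' D'D CD'.
have [N0 HN0] := seq_ubn (finmap.enum_fset D') snd.
have hN : \forall n \near \oo, (N0 <= n)%N by exists N0.
apply: filterS2 hN (tn _ d'0) => n nN0 hn q Cq.
have [[p m] /= pD' qp] := CD' q Cq.
have pD : D (p, m) by have := D'D _ pD'; rewrite inE.
case: pD => /= _ hp.
have mn : (m <= n)%N.
  apply: leq_trans nN0; apply: (HN0 (p, m)).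
  exact: pD'.
have pq : `|p - q| < eta by move: qp; rewrite /f /= -ball_normE.
have l1 := It_lip (mun n) q p ht r0.
have l2 := It_lip mu p q ht r0.
rewrite int0 mulr0 addr0 in l2.
have e1 : `|It (mun n) t q - It (mun n) t p| <= 3 * d'.
  apply: le_trans l1 _; rewrite -/L (_ : 3 * d' = d' + 2 * d'); last first.
    by rewrite [3]/(1 + 2) mulrDl mul1r.
  apply: lerD; first by apply: Leta; rewrite distrC.
  by rewrite ler_pM2l.
have e2 := hp n mn.
have e3 : `|It mu t p - It mu t q| <= d' by apply: le_trans l2 _; exact: Leta.
have -> : It (mun n) t q - It mu t q = (It (mun n) t q - It (mun n) t p)
   + (It (mun n) t p - It mu t p) + (It mu t p - It mu t q).
  by rewrite !addrA subrK subrK.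
apply: le_trans (ler_normD _ _) _; apply: le_trans (lerD (ler_normD _ _) (lexx _)) _.
apply: le_trans (lerD (lerD e1 e2) e3) _.
rewrite (_ : 3 * d' + d' + d' = 5 * d'); last by ring.
by rewrite /d' mulrC divfK // pnatr_eq0.
Qed.

End Tight.

Section C.
Variables (R : realType).
Lemma normC_le (a b : R) : `|(a +i* b)%C| <= ((`|a| + `|b|)%:C)%C.
Proof.
rewrite normc_def /= lecR.
rewrite -(@ger0_norm _ (`|a| + `|b|)) ?addr_ge0 // -sqrtr_sqr ler_sqrt //.
rewrite sqrrD !real_normK ?num_real //.
have := mulr_ge0 (normr_ge0 a) (normr_ge0 b). rewrite -mulr_natr. lra.
Qed.

Lemma subC (a b c d : R) : ((a +i* b) - (c +i* d) = (a - c) +i* (b - d))%C.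
Proof. reflexivity. Qed.
End C.

Lemma lowC (R : realType) (z w : R[i]) (a b : R) : (a%:C <= `|z|)%C -> (`|z - w| <= b%:C)%C ->
  ((a - b)%:C <= `|w|)%C.
Proof.
move=> az zw; rewrite rmorphB /= lerBlDl.
apply: le_trans az _; apply: le_trans (_ : `|z - w| + `|w| <= _).
  by rewrite -{1}(subrK w z) ler_normD.
by rewrite lerD2r.
Qed.

Lemma intvecB (R : realType) s (k j : 'rV[int]_s) : intvec R (k - j) = intvec R k - intvec R j.
Proof. by apply/rowP => i; rewrite !mxE intrB. Qed.

Lemma seq_lb (R : realType) (T : eqType) (l : seq T) (g : T -> R) :
  (forall i, i \in l -> 0 < g i) ->
  exists e, 0 < e /\ forall i, i \in l -> e <= g i.
Proof.
elim: l => [|a l IH] h; first by exists 1.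
have [e [e0 he]] : exists e, 0 < e /\ forall i, i \in l -> e <= g i.
  by apply: IH => i il; apply: h; rewrite inE il orbT.
have ga : 0 < g a by apply: h; rewrite inE eqxx.
exists (Num.min e (g a)); split; first by rewrite lt_min e0 ga.
move=> i; rewrite inE => /orP[/eqP ->|/he h']; first by rewrite ge_min lexx orbT.
by rewrite ge_min h'.
Qed.

Lemma seq_ub (R : realType) (T : eqType) (l : seq T) (g : T -> R) :
  exists M, forall i, i \in l -> g i <= M.
Proof.
elim: l => [|a l [M HM]]; first by exists 0.
exists (Num.max M (g a)) => i; rewrite inE => /orP[/eqP ->|/HM h'].
  by rewrite le_max lexx orbT.
by rewrite le_max h'.
Qed.

Section F.
Variables (R : realType) (s : nat).
Variables (mun : nat -> probability (Rs R s) R) (mu : probability (Rs R s) R).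
Hypothesis hmu : compact_support mu.
Hypothesis hw : weak_cvg mun mu.

Lemma fourierE (nu : probability (Rs R s) R) xi :
  fourier nu xi = (It nu cos xi +i* It nu sin xi)%C.
Proof. reflexivity. Qed.

Lemma F_unif (C : set 'rV[R]_s) d : compact C -> 0 < d ->
  \forall n \near \oo, forall q, C q ->
    (`|fourier (mun n) q - fourier mu q| <= d%:C)%C.
Proof.
move=> cC d0; have d2 : 0 < d / 2 by rewrite divr_gt0.
apply: filterS2 (It_unif hmu hw (cos_trig R) cC d2) (It_unif hmu hw (sin_trig R) cC d2).
move=> n h1 h2 q Cq.
rewrite !fourierE subC; apply: le_trans (normC_le _ _) _.
by rewrite lecR (splitr d) lerD //; [exact: h1|exact: h2].
Qed.

Lemma F_lip : exists L : R, 0 <= L /\ forall a b,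
  (`|fourier mu a - fourier mu b| <= (L * `|a - b|)%:C)%C.
Proof.
have [r [r0 [int0 _]]] := tight hmu hw.
exists (2 * (2 * pi * s%:R * (r + 1))); split.
  by rewrite !mulr_ge0 // ?pi_ge0 // addr_ge0 // ltW.
move=> a b; rewrite !fourierE subC; apply: le_trans (normC_le _ _) _.
rewrite lecR -mulrA mulr_natl mulr2n lerD //.
  by move: (It_lip mu a b (cos_trig R) r0); rewrite int0 mulr0 addr0.
by move: (It_lip mu a b (sin_trig R) r0); rewrite int0 mulr0 addr0.
Qed.

End F.

Lemma cube_norm (R : realType) s (xi : 'rV[R]_s) : unit_cube xi -> `|xi| <= 1.
Proof.
move=> cxi; rewrite [leLHS]/Num.Def.normr /= mx_normrE.
apply: bigmax_le => // -[i j] _ /=; rewrite (ord1 i).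
have /andP[h1 h2] := cxi j; rewrite ger0_norm //; exact: ltW.
Qed.

Lemma nonvan (R : realType) s (mu : probability (Rs R s) R) :
  Zset mu = set0 -> forall p, exists k, fourier mu (p + intvec R k) != 0.
Proof.
move=> Z0 p.
pose J : 'rV[int]_s := map_mx (fun x => Num.floor x) p.
pose p' := p - intvec R J.
have cp : unit_cube p'.
  move=> i; rewrite /p' !mxE subr_ge0 floor_le /= ltrBlDl.
  by rewrite -[_ + 1]/((Num.floor (p ord0 i))%:~R + 1%:~R) -intrD -floor_lt_int ltrDl.
case: (pselect (exists k, fourier mu (p' + intvec R k) != 0)) => [[k hk]|nk].
  exists (k - J); rewrite intvecB addrA addrAC; exact: hk.
have : Zset mu p'.
  split => // k; apply/eqP; apply/negP => h; apply: nk; exists k; exact/negP.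
by rewrite Z0.
Qed.

Unset Implicit Arguments.

Theorem theorem3p8 (R : realType) (s : nat)
  (mun : nat -> probability (Rs R s) R) (mu : probability (Rs R s) R) :
  (forall n, compact_support (mun n)) -> compact_support mu ->
  weak_cvg mun mu ->
  (Zset mu = set0 <->
   exists (eps : R) (N : nat), 0 < eps /\ (0 < N)%N /\
     (forall n, (N <= n)%N -> Zset (mun n) = set0) /\
     exists M : R, forall n, (N <= n)%N -> forall xi, @unit_cube R s xi ->
       exists k : 'rV[int]_s,
         `|@intvec R s k| <= M /\ (eps%:C)%C <= `|fourier (mun n) (xi + @intvec R s k)|).
Proof.
move=> _ hmu hw; split => [Z0|]; last first.
move=> [eps [N [e0 [_ [_ [M HM]]]]]].
apply/seteqP; split => // xi [cxi Fz].
pose rC := `|xi| + `|M| + 1.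
have cC : compact [set q : 'rV[R]_s | `|q| <= rC].
  by apply: cball_compact; rewrite ltr_pwDr // addr_ge0.
have e2 : 0 < eps / 2 by rewrite divr_gt0.
have [N1 _ HN1] := F_unif hmu hw cC e2.
have [k [kM hk]] := HM (maxn N N1) (leq_maxl _ _) xi cxi.
have Cq : `|xi + intvec R k| <= rC.
  apply: le_trans (ler_normD _ _) _; rewrite /rC -addrA lerD2l.
  by apply: le_trans kM _; apply: le_trans (ler_norm M) _; rewrite lerDl.
have := HN1 (maxn N N1) (leq_maxr _ _) _ Cq; rewrite Fz subr0 => h.
have := le_trans hk h; rewrite lecR => h'.
have : eps <= 0 by lra.
by rewrite leNgt e0.
have [L [L0 hL]] := F_lip hmu hw.
pose Q := [set v : 'rV[R]_s | forall i, (fun=> `[(0:R), 1]%classic) i (v ord0 i)].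
have cQ : compact Q by apply: rV_compact => _; exact: segment_compact.
pose D := [set pkc : 'rV[R]_s * 'rV[int]_s * R | 0 < pkc.2 /\
  forall xi, ball pkc.1.1 pkc.2 xi ->
    (pkc.2%:C <= `|fourier mu (xi + intvec R pkc.1.2)|)%C].
pose f := fun pkc : 'rV[R]_s * 'rV[int]_s * R => ball pkc.1.1 pkc.2.
have cov : Q `<=` cover D f.
  move=> p _; have [k hk] := nonvan Z0 p.
  set z := fourier mu (p + intvec R k) in hk.
  pose c0 := complex.Re `|z|.
  have zc : `|z| = (c0%:C)%C by rewrite /c0 normc_def.
  have c00 : 0 < c0 by rewrite -ltcR -zc normr_gt0.
  pose c := (c0 / 2) / (L + 1).
  have L1 : 0 < L + 1 by rewrite ltr_pwDr.
  have cL : c * (L + 1) = c0 / 2 by rewrite /c divfK // gt_eqF.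
  have c_0 : 0 < c by rewrite /c !divr_gt0.
  exists (p, k, c); last exact: ballxx.
  split => // xi /=; rewrite -ball_normE /= => pxi.
  have h1 : (`|z - fourier mu (xi + intvec R k)| <= (c0 / 2)%:C)%C.
    apply: le_trans (hL _ _) _; rewrite lecR.
    rewrite (_ : p + intvec R k - (xi + intvec R k) = p - xi); last first.
      by rewrite opprD addrACA subrr addr0.
    apply: le_trans (_ : L * c <= _).
      by apply: ler_wpM2l => //; exact: ltW.
    have := mulr_ge0 (ltW c_0) L0; rewrite -cL mulrDr mulr1 mulrC; lra.
  have zc' : (c0%:C <= `|z|)%C by rewrite zc.
  apply: le_trans (lowC zc' h1); rewrite lecR.
  have := mulr_ge0 (ltW c_0) L0; rewrite mulrDr mulr1 in cL; lra.
have cQ' := cQ; rewrite compact_cover in cQ'.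
have [D' D'D QD'] := cQ' _ D f (fun i _ => ball_open _ _) cov.
have [e [e0 he]] := seq_lb (l := finmap.enum_fset D') (g := fun i => i.2)
  (fun i iD => (proj1 (set_mem (D'D i iD)))).
have [M hM] := seq_ub (finmap.enum_fset D') (fun i => `|intvec R i.1.2|).
pose rC := `|M| + 2.
have cC : compact [set q : 'rV[R]_s | `|q| <= rC].
  by apply: cball_compact; rewrite ltr_pwDr.
have e2 : 0 < e / 2 by rewrite divr_gt0.
have [N1 _ HN1] := F_unif hmu hw cC e2.
have main : forall n, (N1 <= n)%N -> forall xi, unit_cube xi ->
    exists k, `|intvec R k| <= M /\
      (((e / 2)%:C)%C <= `|fourier (mun n) (xi + intvec R k)|).
  move=> n nN xi cxi.
  have Qxi : Q xi.
    move=> i; have /andP[h1 h2] := cxi i.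
    by rewrite /= in_itv /= h1 ltW.
  have [[[p k] c] pD' xip] := QD' xi Qxi.
  have [_ hc] : D (p, k, c) by have := D'D _ pD'; rewrite inE.
  have := hc xi xip => /= hcx.
  exists k; split; first exact: (hM _ pD').
  have ec : e <= c := he _ pD'.
  have Cq : `|xi + intvec R k| <= rC.
    apply: le_trans (ler_normD _ _) _; rewrite /rC [`|M| + 2]addrC lerD //.
      by apply: le_trans (cube_norm cxi) _; rewrite ler1n.
    by apply: le_trans (hM _ pD') _; exact: ler_norm.
  have := HN1 n nN _ Cq; rewrite distrC => h.
  apply: le_trans (lowC hcx h); rewrite lecR; lra.
exists (e / 2), N1.+1; split => //; split => //; split.
  move=> n nN; apply/seteqP; split => // xi [cxi hz].
  have [k [_ hk]] := main n (ltnW nN) xi cxi.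
  rewrite hz normr0 in hk.
  have : ((0:R)%:C < ((e / 2)%:C))%C by rewrite ltcR.
  by move/lt_le_trans => /(_ _ hk); rewrite ltxx.
by exists M => n nN xi cxi; exact: main n (ltnW nN) xi cxi.
Qed.
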